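(* Let $\mathcal{A}=\{H_1,\dots,H_m\}$ be an arrangement of hyperplanes in $\mathbb{P}^n$ and let $P_1,\dots,P_m\in\mathrm{End}(\mathbb{C}^r)$ satisfy $\sum_{j=1}^m P_j=0$ and $[P_j,P_X]=0$ for all $j$ and all edges $X$ with $\operatorname{codim}X=2$ and $X\subseteq H_j$, where $P_X=\sum_{X\subseteq H_j}P_j$. Suppose there is $H\in\mathcal{A}$ such that for every dense edge $X\subseteq H$, no eigenvalue of $P_X$ lies in $\mathbb{Z}$. Then there exist integers $k_1,\dots,k_m$ with $\sum_j k_j=0$ such that the collection $(P_1+k_1\mathbb{I}_r,\dots,P_m+k_m\mathbb{I}_r)$ has the property that for every dense edge $X$ of $\mathcal{A}$, no eigenvalue of $\sum_{X\subseteq H_j}(P_j+k_j\mathbb{I}_r)$ lies in $\mathbb{Z}_{\geq 0}$.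
   Context: $\mathbb{I}_r$ is the $r\times r$ identity matrix. An edge is a nonempty intersection of hyperplanes of $\mathcal{A}$; an edge $X$ is dense if the subarrangement of hyperplanes containing $X$ is irreducible, i.e. cannot be partitioned into two nonempty sets which, after a linear change of coordinates, are defined by linear forms in disjoint sets of coordinates (each hyperplane is a dense edge). *)

(* Defs.v *)
(* Field: any numClosedFieldType C (e.g. the complex numbers). *)
From HB Require Import structures.
From mathcomp Require Import all_boot all_order all_algebra.
From mathcomp Require Import boolp.
Set Implicit Arguments.
Unset Strict Implicit.
Unset Printing Implicit Defensive.
Import Order.TTheory GRing.Theory Num.Theory.
Local Open Scope ring_scope.

Section Arrangement.
Variables (C : numClosedFieldType) (n m : nat).
(* Hyperplane H_j in P^n is the zero locus of the nonzero linear form f j on C^(n+1). *)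
Variable f : 'I_m -> 'rV[C]_n.+1.

Definition on_hyp (j : 'I_m) (v : 'cV[C]_n.+1) : Prop := f j *m v = 0.

Definition is_arrangement : Prop :=
  (forall j, f j != 0) /\
  (forall i j : 'I_m, i != j -> ~ (forall v, on_hyp i v <-> on_hyp j v)).

Definition in_inter (S : {set 'I_m}) (v : 'cV[C]_n.+1) : Prop :=
  forall i, i \in S -> on_hyp i v.

(* X_S is an edge: a nonempty (in P^n) intersection of (at least one) hyperplanes *)
Definition is_edge (S : {set 'I_m}) : Prop :=
  S != set0 /\ exists v, v != 0 /\ in_inter S v.

Definition contained (S : {set 'I_m}) (j : 'I_m) : Prop :=
  forall v, v != 0 -> in_inter S v -> on_hyp j v.

(* codimension of X_S in P^n = rank of the system of linear forms defining it *)
Definition codim (S : {set 'I_m}) : nat :=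
  \rank (\matrix_(i < m, k < n.+1) (if i \in S then f i 0 k else 0)).

(* the subarrangement {H_j : X_S \subseteq H_j} is reducible: it splits into two
   nonempty parts which, after a linear change of coordinates g, are defined by
   linear forms in disjoint sets of coordinates (I and its complement) *)
Definition reducible (S : {set 'I_m}) : Prop :=
  exists B : {set 'I_m},
    (exists j, j \in B) /\
    (exists j, contained S j /\ j \notin B) /\
    (forall j, j \in B -> contained S j) /\
    exists (g : 'M[C]_n.+1) (I : {set 'I_n.+1}),
      g \in unitmx /\
      (forall j, j \in B -> forall k, k \notin I -> (f j *m g) 0 k = 0) /\
      (forall j, contained S j -> j \notin B -> forall k, k \in I -> (f j *m g) 0 k = 0).

Definition dense (S : {set 'I_m}) : Prop := is_edge S /\ ~ reducible S.

Definition PX (r : nat) (P : 'I_m -> 'M[C]_r) (S : {set 'I_m}) : 'M[C]_r :=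
  \sum_(j < m | `[< contained S j >]) P j.

End Arrangement.

(* Main.v *)
Require Import Defs.
From HB Require Import structures.
From mathcomp Require Import all_boot all_order all_algebra.
From mathcomp Require Import boolp.
Import Order.TTheory GRing.Theory Num.Theory.
Local Open Scope ring_scope.
From mathcomp Require Import zify.
Lemma nat_roots_bounded (R : numDomainType) (p : {poly R}) : p != 0 ->
  exists N : nat, forall w : nat, (N <= w)%N -> ~~ root p w%:R.
Proof.
move: {2}(size p) (leqnn (size p)) => sz; elim: sz p => [|sz IH] p Hs pn0.
  by move: Hs; rewrite leqn0 size_poly_eq0 (negbTE pn0).
case: (pselect (exists w : nat, root p w%:R)) => [[w0 Hw0]|Hno]; last first.
  by exists 0%N => w _; apply/negP => Hr; apply: Hno; exists w.
have [q Hq] := factor_theorem p w0%:R Hw0.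
have qn0 : q != 0 by apply: contraNneq pn0 => q0; rewrite Hq q0 mul0r.
have Hsq : (size q <= sz)%N.
  move: Hs; rewrite Hq size_mul ?polyXsubC_eq0 // size_XsubC addn2 /=.
  by [].
have [N HN] := IH q Hsq qn0.
exists (maxn N w0.+1) => w; rewrite geq_max => /andP[HNw Hw].
rewrite Hq rootM negb_or HN //= root_XsubC eqr_nat.
by apply/negP => /eqP E; move: Hw; rewrite E ltnn.
Qed.

Lemma fin_bound (T : finType) (Q : T -> nat -> Prop) :
  (forall t, exists N : nat, forall w, (N <= w)%N -> Q t w) ->
  exists N : nat, forall t w, (N <= w)%N -> Q t w.
Proof.
move=> H.
suff [N HN] : exists N : nat, forall t, t \in enum T -> forall w, (N <= w)%N -> Q t w.
  by exists N => t w; apply: HN; rewrite mem_enum.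
elim: (enum T) => [|a s [N HN]]; first by exists 0%N.
have [Na HNa] := H a.
exists (maxn N Na) => t; rewrite inE => /orP[/eqP->|ts] w; rewrite geq_max => /andP[h1 h2].
  exact: HNa.
exact: HN.
Qed.

Lemma eig_shift (F : fieldType) r (A : 'M[F]_r) (c a : F) :
  eigenvalue (A + c%:M) a = eigenvalue A (a - c).
Proof.
by rewrite /eigenvalue /eigenspace raddfB /= opprB addrA.
Qed.

Lemma PX_shift (C : numClosedFieldType) (n m r : nat)
    (f : 'I_m -> 'rV[C]_n.+1) (P : 'I_m -> 'M[C]_r) (k : 'I_m -> int) S :
  PX f (fun j => P j + ((k j)%:~R)%:M) S =
  PX f P S + ((\sum_(j < m | `[< contained f S j >]) k j)%:~R)%:M.
Proof.
rewrite /PX big_split /=; congr (_ + _).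
rewrite mulrz_sumr raddf_sum /=.
by [].
Qed.

Theorem proposition4p1 (C : numClosedFieldType) (n m r : nat)
    (f : 'I_m -> 'rV[C]_n.+1) (P : 'I_m -> 'M[C]_r) :
  is_arrangement f ->
  \sum_(j < m) P j = 0 ->
  (forall (j : 'I_m) (S : {set 'I_m}),
      is_edge f S -> codim f S = 2%N -> contained f S j ->
      P j *m PX f P S = PX f P S *m P j) ->
  (exists h : 'I_m, forall S : {set 'I_m},
      dense f S -> contained f S h ->
      forall z : int, ~~ eigenvalue (PX f P S) (z%:~R)) ->
  exists k : 'I_m -> int,
    \sum_(j < m) k j = 0 /\
    forall S : {set 'I_m}, dense f S ->
      forall z : nat,
        ~~ eigenvalue (PX f (fun j => P j + ((k j)%:~R)%:M) S) (z%:R).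
Proof.
move=> _ _ _ [h Hh].
have [N HN] : exists N : nat, forall S w, (N <= w)%N -> ~~ eigenvalue (PX f P S) w%:R.
  apply: (@fin_bound _ (fun S w => ~~ eigenvalue (PX f P S) w%:R)) => S.
  have [N HN] := @nat_roots_bounded _ _ (monic_neq0 (char_poly_monic (PX f P S))).
  by exists N => w hw; rewrite eigenvalue_root_char; exact: HN.
pose k (j : 'I_m) : int := if j == h then \sum_(i < m | i != h) (N%:Z) else - N%:Z.
exists k; split.
  have Hk : forall j, j != h -> k j = - N%:Z by move=> j /negbTE Hj; rewrite /k Hj.
  have kh : k h = \sum_(i < m | i != h) (N%:Z) by rewrite /k eqxx.
  rewrite (bigD1 h) //= (eq_bigr _ Hk) kh.
  by rewrite sumrN subrr.
move=> S HS z; rewrite PX_shift eig_shift.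
set c := \sum_(j < m | _) k j.
case: (pselect (contained f S h)) => Hc.
  have -> : (z%:R - c%:~R : C) = (z%:Z - c)%:~R by rewrite rmorphB.
  exact: Hh.
have [i iS] : exists i, i \in S.
  by case: HS => [[/set0Pn [i iS] _] _]; exists i.
have ci : contained f S i by move=> v _ Hv; exact: Hv i iS.
have Hkc : c <= - N%:Z.
  rewrite /c (bigD1 i) /=; last by apply/asboolP.
  have -> : k i = - N%:Z.
    by rewrite /k; case: eqP => // eih; case: Hc; rewrite -eih.
  rewrite (eq_bigr (fun _ => - N%:Z)); last first.
    move=> j /andP [/asboolP cj _]; rewrite /k; case: eqP => // ejh.
    by case: Hc; rewrite -ejh.
  rewrite sumrN.
  have : 0 <= \sum_(j < m | `[< contained f S j >] && (j != i)) N%:Z.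
    by apply: sumr_ge0.
  by move=> Hs; rewrite lerBlDr lerDl.
have hw : (z%:Z - c) = (`|z%:Z - c|%N)%:Z.
  rewrite gez0_abs //; lia.
have -> : (z%:R - c%:~R : C) = (`|z%:Z - c|%N)%:R.
  by rewrite -[RHS]/((Posz `|z%:Z - c|%N)%:~R) -hw rmorphB.
apply: HN.
have : (N%:Z <= `|z%:Z - c|%N) by rewrite -hw; lia.
by rewrite lez_nat.
Qed.
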